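(* There exist a financial system $S$ with payment priorities and a bank $v$ such that: $S$ has exactly two solutions $r_1\neq r_2$, with $q_v(r_1)>0$ and $q_v(r_2)=0$; and for some system $S'$ obtained from $S$ by changing the priorities of (some of) the contracts whose debtor is $v$ (everything else unchanged), $S'$ has exactly one solution $r'$, which satisfies $r'=r_1$ and $q'_v(r')=q_v(r_1)$, where $q'_v$ is the payoff of $v$ in $S'$.
   Context: A financial system with payment priorities consists of: a finite set $V$ of banks; external assets $e_v\ge 0$ for each $v\in V$; a number $P\ge 1$ of priority levels; and a finite set of contracts, each of which is either a debt contract from a debtor $u$ to a creditor $v\neq u$ with weight $c>0$, or a credit default swap (CDS) from a debtor $u$ to a creditor $v\neq u$ in reference to a bank $w\notin\{u,v\}$ (the reference entity) with weight $c>0$. Every contract has a priority in $\{1,\dots,P\}$ (1 is the highest priority). It is assumed that every bank that is the reference entity of some CDS is the debtor of at least one debt contract of positive weight. Given a recovery rate vector $r\in[0,1]^V$: the liability of a contract $k$ is $l_k(r)=c$ if $k$ is a debt of weight $c$, and $l_k(r)=c\,(1-r_w)$ if $k$ is a CDS of weight $c$ in reference to $w$. For a bank $v$, $l_v(r)$ is the sum of the liabilities of the contracts with debtor $v$; $l_v^{(\rho)}(r)$ is the sum of the liabilities of contracts with debtor $v$ and priority $\rho$; and $l_v^{(\le\rho)}(r)=\sum_{i=1}^{\rho}l_v^{(i)}(r)$ (with $l_v^{(\le 0)}=0$). The payment on a contract $k$ with debtor $v$ and priority $\rho$ is $p_k(r)=l_k(r)\cdot\min\{1,\max\{0,(r_v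 l_v(r)-l_v^{(\le\rho-1)}(r))/l_v^{(\rho)}(r)\}\}$ (and $p_k(r)=0$ if $l_v^{(\rho)}(r)=0$). The assets of $v$ are $a_v(r)=e_v+\sum_k p_k(r)$, summing over contracts $k$ with creditor $v$. A vector $r\in[0,1]^V$ is a solution (clearing vector) if for every $v\in V$: $r_v=1$ when $a_v(r)\ge l_v(r)$, and $r_v=a_v(r)/l_v(r)$ when $a_v(r)<l_v(r)$. The payoff of $v$ is $q_v(r)=\max\{a_v(r)-l_v(r),0\}$. When $P=1$, payments reduce to $p_k(r)=r_v\,l_k(r)$ (principle of proportionality); this is called the base model. *)

(* Defs.v *)
From Stdlib Require Import Reals List Arith Bool.
Import ListNotations.
Open Scope R_scope.

(* Banks are the natural numbers 0, ..., nbanks-1. *)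
Inductive ckind : Type :=
| Debt : ckind
| CDS : nat -> ckind.   (* CDS in reference to the given bank *)

Record contract : Type := mkContract {
  kind : ckind;
  debtor : nat;
  creditor : nat;
  weight : R;
  prio : nat
}.

Record fsystem : Type := mkSystem {
  nbanks : nat;
  ext : nat -> R;
  nprio : nat;
  contracts : list contract
}.

Definition sumR (l : list R) : R := fold_right Rplus 0 l.

Definition contract_ok (S : fsystem) (k : contract) : Prop :=
  (debtor k < nbanks S)%nat /\ (creditor k < nbanks S)%nat /\
  debtor k <> creditor k /\ 0 < weight k /\
  (1 <= prio k <= nprio S)%nat /\
  match kind k with
  | Debt => True
  | CDS w => (w < nbanks S)%nat /\ w <> debtor k /\ w <> creditor k
  end.

Definition valid_system (S : fsystem) : Prop :=
  (forall v, (v < nbanks S)%nat -> 0 <= ext S v) /\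
  (1 <= nprio S)%nat /\
  (forall k, In k (contracts S) -> contract_ok S k) /\
  (forall k w, In k (contracts S) -> kind k = CDS w ->
     exists k', In k' (contracts S) /\ kind k' = Debt /\ debtor k' = w /\ 0 < weight k').

Definition liab (r : nat -> R) (k : contract) : R :=
  match kind k with
  | Debt => weight k
  | CDS w => weight k * (1 - r w)
  end.

Definition l_v (S : fsystem) (r : nat -> R) (v : nat) : R :=
  sumR (map (liab r) (filter (fun k => Nat.eqb (debtor k) v) (contracts S))).

Definition l_vp (S : fsystem) (r : nat -> R) (v rho : nat) : R :=
  sumR (map (liab r)
    (filter (fun k => andb (Nat.eqb (debtor k) v) (Nat.eqb (prio k) rho)) (contracts S))).

(* l_v^{(<= rho)} = sum_{i=1}^{rho} l_v^{(i)} ; equals 0 for rho = 0 *)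
Definition l_vle (S : fsystem) (r : nat -> R) (v rho : nat) : R :=
  sumR (map (l_vp S r v) (seq 1 rho)).

Definition payment (S : fsystem) (r : nat -> R) (k : contract) : R :=
  let v := debtor k in
  let rho := prio k in
  if Req_EM_T (l_vp S r v rho) 0 then 0
  else liab r k *
       Rmin 1 (Rmax 0 ((r v * l_v S r v - l_vle S r v (rho - 1)) / l_vp S r v rho)).

Definition assets (S : fsystem) (r : nat -> R) (v : nat) : R :=
  ext S v + sumR (map (payment S r)
                   (filter (fun k => Nat.eqb (creditor k) v) (contracts S))).

Definition is_solution (S : fsystem) (r : nat -> R) : Prop :=
  forall v, (v < nbanks S)%nat ->
    0 <= r v <= 1 /\
    (assets S r v >= l_v S r v -> r v = 1) /\
    (assets S r v < l_v S r v -> r v = assets S r v / l_v S r v).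

Definition payoff (S : fsystem) (r : nat -> R) (v : nat) : R :=
  Rmax (assets S r v - l_v S r v) 0.

(* equality of recovery vectors as elements of [0,1]^V *)
Definition same_vec (S : fsystem) (r1 r2 : nat -> R) : Prop :=
  forall v, (v < nbanks S)%nat -> r1 v = r2 v.

Definition reprioritized (S S' : fsystem) (v : nat) : Prop :=
  nbanks S' = nbanks S /\ ext S' = ext S /\ nprio S' = nprio S /\
  Forall2 (fun k k' => kind k' = kind k /\ debtor k' = debtor k /\
                       creditor k' = creditor k /\ weight k' = weight k /\
                       (prio k' = prio k \/ debtor k = v))
          (contracts S) (contracts S').

(* Main.v *)
Require Import Defs.
From Stdlib Require Import Reals List Arith.
From Stdlib Require Import Lra Psatz.
Import ListNotations.
Open Scope R_scope.

Definition k1 := mkContract Debt 0 1 1 1.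
Definition k2 := mkContract (CDS 1) 0 2 3 1.
Definition k3 := mkContract Debt 1 2 1 1.
Definition k2' := mkContract (CDS 1) 0 2 3 2.
Definition S0 := mkSystem 3 (fun i => match i with 0%nat => 4/3 | _ => 0 end) 2 [k1;k2;k3].
Definition S1 := mkSystem 3 (fun i => match i with 0%nat => 4/3 | _ => 0 end) 2 [k1;k2';k3].

Lemma clamp_id x : 0 <= x <= 1 -> Rmin 1 (Rmax 0 x) = x.
Proof. intros. unfold Rmin, Rmax; repeat destruct Rle_dec; lra. Qed.
Lemma clamp_1 x : 1 <= x -> Rmin 1 (Rmax 0 x) = 1.
Proof. intros. unfold Rmin, Rmax; repeat destruct Rle_dec; lra. Qed.
Lemma clamp_b x : 0 <= Rmin 1 (Rmax 0 x) <= 1.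
Proof. unfold Rmin, Rmax; repeat destruct Rle_dec; lra. Qed.

Lemma S0_l0 r : l_v S0 r 0 = 1 + (3 * (1 - r 1%nat) + 0).
Proof. reflexivity. Qed.
Lemma S0_l1 r : l_v S0 r 1 = 1 + 0.
Proof. reflexivity. Qed.
Lemma S0_l2 r : l_v S0 r 2 = 0.
Proof. reflexivity. Qed.
Lemma S0_a0 r : assets S0 r 0 = 4/3 + 0.
Proof. reflexivity. Qed.
Lemma S0_a1 r : 0 <= r 0%nat <= 1 -> r 1%nat <= 1 -> assets S0 r 1 = r 0%nat.
Proof.
  intros. unfold assets, payment, l_vp, l_v, l_vle, liab; simpl.
  destruct Req_dec_T; [lra|].
  rewrite clamp_id; [field; lra|].
  replace ((r 0%nat * (1 + (3 * (1 - r 1%nat) + 0)) - 0) / (1 + (3 * (1 - r 1%nat) + 0)))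
    with (r 0%nat) by (field; lra). lra.
Qed.
Lemma S0_a2 r : 0 <= r 1%nat <= 1 -> 0 <= assets S0 r 2.
Proof.
  intros. unfold assets, payment, l_vp, l_v, l_vle, liab; simpl.
  repeat destruct Req_dec_T; pose proof (clamp_b ((r 0%nat * (1 + (3 * (1 - r 1%nat) + 0)) - 0) /
          (1 + (3 * (1 - r 1%nat) + 0)))); pose proof (clamp_b ((r 1%nat * (1 + 0) - 0) / (1 + 0)));
  nra.
Qed.

Lemma S1_l0 r : l_v S1 r 0 = 1 + (3 * (1 - r 1%nat) + 0).
Proof. reflexivity. Qed.
Lemma S1_l1 r : l_v S1 r 1 = 1 + 0.
Proof. reflexivity. Qed.
Lemma S1_l2 r : l_v S1 r 2 = 0.
Proof. reflexivity. Qed.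
Lemma S1_a0 r : assets S1 r 0 = 4/3 + 0.
Proof. reflexivity. Qed.
Lemma S1_a1 r : 1 <= r 0%nat * (1 + (3 * (1 - r 1%nat) + 0)) -> assets S1 r 1 = 1.
Proof.
  intros. unfold assets, payment, l_vp, l_v, l_vle, liab; simpl.
  destruct Req_dec_T; [lra|].
  rewrite clamp_1; [lra|]. lra.
Qed.
Lemma S1_a2 r : 0 <= r 1%nat <= 1 -> 0 <= assets S1 r 2.
Proof.
  intros. unfold assets, payment, l_vp, l_v, l_vle, liab; simpl.
  repeat match goal with |- context [Rmin 1 (Rmax 0 ?x)] => pose proof (clamp_b x); generalize dependent (Rmin 1 (Rmax 0 x)); intros end;
  repeat destruct Req_dec_T; nra.
Qed.

Definition rA : nat -> R := fun _ => 1.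
Definition rB : nat -> R := fun i => match i with 0%nat | 1%nat => 2/3 | _ => 1 end.

Lemma lt3 v : (v < 3)%nat -> v = 0%nat \/ v = 1%nat \/ v = 2%nat.
Proof. intros; lia. Qed.

Lemma valid0 : valid_system S0.
Proof.
  split; [|split; [|split]].
  - intros v Hv; destruct (lt3 v Hv) as [ -> | [ -> | -> ] ]; simpl; lra.
  - simpl; lia.
  - intros k Hk; simpl in Hk; destruct Hk as [ <- | [ <- | [ <- | [] ] ] ];
      unfold contract_ok; simpl; repeat split; try lia; lra.
  - intros k w Hk Hw; simpl in Hk; destruct Hk as [ <- | [ <- | [ <- | [] ] ] ]; simpl in Hw; try discriminate.
    injection Hw as <-. exists k3; simpl; repeat split; auto; lra.
Qed.
Lemma valid1 : valid_system S1.
Proof.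
  split; [|split; [|split]].
  - intros v Hv; destruct (lt3 v Hv) as [ -> | [ -> | -> ] ]; simpl; lra.
  - simpl; lia.
  - intros k Hk; simpl in Hk; destruct Hk as [ <- | [ <- | [ <- | [] ] ] ];
      unfold contract_ok; simpl; repeat split; try lia; lra.
  - intros k w Hk Hw; simpl in Hk; destruct Hk as [ <- | [ <- | [ <- | [] ] ] ]; simpl in Hw; try discriminate.
    injection Hw as <-. exists k3; simpl; repeat split; auto; lra.
Qed.

Lemma solA : is_solution S0 rA.
Proof.
  intros v Hv; destruct (lt3 v Hv) as [ -> | [ -> | -> ] ].
  - rewrite S0_a0, S0_l0; unfold rA; repeat split; try lra.
  - rewrite S0_a1, S0_l1; unfold rA; try lra; repeat split; lra.
  - pose proof (S0_a2 rA). rewrite S0_l2; unfold rA in *; repeat split; try lra.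
Qed.

Lemma solB : is_solution S0 rB.
Proof.
  intros v Hv; destruct (lt3 v Hv) as [ -> | [ -> | -> ] ].
  - rewrite S0_a0, S0_l0; unfold rB; repeat split; try lra; intros; field.
  - rewrite S0_a1, S0_l1; unfold rB; try lra; repeat split; try lra; intros; field.
  - pose proof (S0_a2 rB). rewrite S0_l2; unfold rB in *; repeat split; try lra.
Qed.

Lemma uniq0 r : is_solution S0 r -> same_vec S0 r rA \/ same_vec S0 r rB.
Proof.
  intros H.
  destruct (H 0%nat ltac:(simpl; lia)) as [B0 [H0a H0b]].
  destruct (H 1%nat ltac:(simpl; lia)) as [B1 [H1a H1b]].
  destruct (H 2%nat ltac:(simpl; lia)) as [B2 [H2a H2b]].
  rewrite S0_a0, S0_l0 in H0a, H0b.
  rewrite S0_a1, S0_l1 in H1a, H1b by lra.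
  pose proof (S0_a2 r B1). rewrite S0_l2 in H2a.
  assert (E2 : r 2%nat = 1) by (apply H2a; lra).
  assert (E1 : r 1%nat = r 0%nat).
  { destruct (Rle_lt_dec 1 (r 0%nat)).
    - rewrite H1a; lra.
    - rewrite H1b by lra. field. }
  destruct (Rle_lt_dec (1 + (3 * (1 - r 1%nat) + 0)) (4/3 + 0)) as [Hs|Hs].
  - left. assert (r 0%nat = 1) by (apply H0a; lra).
    intros v Hv; destruct (lt3 v Hv) as [ -> | [ -> | -> ] ]; unfold rA; lra.
  - right. pose proof (H0b Hs) as E0.
    assert (E0' : r 0%nat * (1 + (3 * (1 - r 1%nat) + 0)) = 4/3).
    { rewrite E0 at 1. field. lra. }
    rewrite E1 in E0'.
    assert (r 0%nat = 2/3) by nra.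
    intros v Hv; destruct (lt3 v Hv) as [ -> | [ -> | -> ] ]; unfold rB; lra.
Qed.

Lemma solA1 : is_solution S1 rA.
Proof.
  intros v Hv; destruct (lt3 v Hv) as [ -> | [ -> | -> ] ].
  - rewrite S1_a0, S1_l0; unfold rA; repeat split; try lra.
  - rewrite S1_a1, S1_l1; unfold rA; try lra; repeat split; lra.
  - pose proof (S1_a2 rA). rewrite S1_l2; unfold rA in *; repeat split; try lra.
Qed.

Lemma uniq1 r : is_solution S1 r -> same_vec S1 r rA.
Proof.
  intros H.
  destruct (H 0%nat ltac:(simpl; lia)) as [B0 [H0a H0b]].
  destruct (H 1%nat ltac:(simpl; lia)) as [B1 [H1a H1b]].
  destruct (H 2%nat ltac:(simpl; lia)) as [B2 [H2a H2b]].
  rewrite S1_a0, S1_l0 in H0a, H0b.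
  assert (P : 1 <= r 0%nat * (1 + (3 * (1 - r 1%nat) + 0))).
  { destruct (Rle_lt_dec (1 + (3 * (1 - r 1%nat) + 0)) (4/3 + 0)) as [Hs|Hs].
    - rewrite (H0a ltac:(lra)). lra.
    - rewrite (H0b Hs). field_simplify; lra. }
  rewrite S1_a1, S1_l1 in H1a by exact P.
  assert (E1 : r 1%nat = 1) by (apply H1a; lra).
  assert (E0 : r 0%nat = 1) by (apply H0a; rewrite E1; lra).
  pose proof (S1_a2 r B1). rewrite S1_l2 in H2a.
  assert (E2 : r 2%nat = 1) by (apply H2a; lra).
  intros v Hv; destruct (lt3 v Hv) as [ -> | [ -> | -> ] ]; unfold rA; lra.
Qed.

Theorem mainTheorem9 :
  exists (S : fsystem) (v : nat),
    valid_system S /\ (v < nbanks S)%nat /\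
    exists r1 r2 : nat -> R,
      is_solution S r1 /\ is_solution S r2 /\ ~ same_vec S r1 r2 /\
      (forall r, is_solution S r -> same_vec S r r1 \/ same_vec S r r2) /\
      payoff S r1 v > 0 /\ payoff S r2 v = 0 /\
      exists S' : fsystem,
        reprioritized S S' v /\ valid_system S' /\
        exists r' : nat -> R,
          is_solution S' r' /\
          (forall r, is_solution S' r -> same_vec S' r r') /\
          same_vec S r' r1 /\
          payoff S' r' v = payoff S r1 v.
Proof.
  exists S0, 0%nat. split; [exact valid0|]. split; [simpl; lia|].
  exists rA, rB. split; [exact solA|]. split; [exact solB|].
  split. { intros Hs. specialize (Hs 0%nat ltac:(simpl; lia)). unfold rA, rB in Hs; lra. }
  split; [exact uniq0|].
  assert (PA : payoff S0 rA 0 = 1/3).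
  { unfold payoff; rewrite S0_a0, S0_l0; unfold rA, Rmax; destruct Rle_dec; lra. }
  split. { rewrite PA; lra. }
  split. { unfold payoff; rewrite S0_a0, S0_l0; unfold rB, Rmax; destruct Rle_dec; lra. }
  exists S1. split.
  { unfold reprioritized; simpl; repeat split; auto.
    repeat (constructor; [simpl; repeat split; auto|]); constructor. }
  split; [exact valid1|].
  exists rA. split; [exact solA1|]. split; [exact uniq1|].
  split; [intros v _; reflexivity|].
  rewrite PA. unfold payoff; rewrite S1_a0, S1_l0; unfold rA, Rmax; destruct Rle_dec; lra.
Qed.
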